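(* Let $X_0\in\mathcal{D}^0$. Then system (S) has a unique solution $X(t)=(B(t),I(t),M(t),N(t))$ defined on $[0,+\infty)$ with $X(0)=X_0$. Moreover $X(t)\in\mathcal{D}^0$ for every $t>0$, $$\frac{b}{m+\mu}\le \liminf_{t\to+\infty}\big(B(t)+I(t)\big)\le \limsup_{t\to+\infty}\big(B(t)+I(t)\big)\le \frac{b}{m},$$ and there is a constant $L>0$ (which may depend on $X_0$) such that $M(t)+N(t)\le L$ for all $t\ge 0$.
   Context: All parameters $b,\lambda,\gamma,m,\mu,r,n,p,h,\beta,\delta,e$ are positive constants. Here $B,I$ denote healthy and infected bees and $M,N$ healthy and infected mites. The model (S) is $$B'=\frac{bB}{B+I}-\lambda BN-\gamma BI-mB,\qquad I'=\frac{bI}{B+I}+\lambda BN+\gamma BI-(m+\mu)I,$$ $$M'=r(M+N)-nM-\frac{p}{h(B+I)}M(M+N)-M(\beta I+\delta N+eB),$$ $$N'=-nN-\frac{p}{h(B+I)}N(M+N)+\beta MI+\delta MN-eNB,$$ considered on the domain $\mathcal{D}^0=\{(B,I,M,N)\in\mathbb{R}^4_+ : B+I\neq 0\}$, where $\mathbb{R}_+=[0,\infty)$. *)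

(* Defs.v *)
From Stdlib Require Import Reals.
Open Scope R_scope.

Definition fB (b lam gam m : R) (B I M N : R) : R :=
  b * B / (B + I) - lam * B * N - gam * B * I - m * B.

Definition fI (b lam gam m mu : R) (B I M N : R) : R :=
  b * I / (B + I) + lam * B * N + gam * B * I - (m + mu) * I.

Definition fM (r n p h beta delta e : R) (B I M N : R) : R :=
  r * (M + N) - n * M - p / (h * (B + I)) * M * (M + N)
  - M * (beta * I + delta * N + e * B).

Definition fN (n p h beta delta e : R) (B I M N : R) : R :=
  - n * N - p / (h * (B + I)) * N * (M + N) + beta * M * I + delta * M * N
  - e * N * B.

Definition inD0 (B I M N : R) : Prop :=
  0 <= B /\ 0 <= I /\ 0 <= M /\ 0 <= N /\ B + I <> 0.

(* (B,I,M,N) is a solution of (S) on [0,+oo) with initial value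
   (B0,I0,M0,N0): it takes the initial value at t = 0, is right-continuous
   at 0, satisfies the ODE (two-sided derivative) at every t > 0, and stays
   in the open set {B + I <> 0} where the vector field is defined. *)
Definition is_solution
  (b lam gam m mu r n p h beta delta e : R)
  (B0 I0 M0 N0 : R) (B I M N : R -> R) : Prop :=
  B 0 = B0 /\ I 0 = I0 /\ M 0 = M0 /\ N 0 = N0 /\
  limit1_in B (fun t => 0 < t) B0 0 /\
  limit1_in I (fun t => 0 < t) I0 0 /\
  limit1_in M (fun t => 0 < t) M0 0 /\
  limit1_in N (fun t => 0 < t) N0 0 /\
  (forall t, 0 <= t -> B t + I t <> 0) /\
  (forall t, 0 < t ->
     derivable_pt_lim B t (fB b lam gam m (B t) (I t) (M t) (N t)) /\
     derivable_pt_lim I t (fI b lam gam m mu (B t) (I t) (M t) (N t)) /\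
     derivable_pt_lim M t (fM r n p h beta delta e (B t) (I t) (M t) (N t)) /\
     derivable_pt_lim N t (fN n p h beta delta e (B t) (I t) (M t) (N t))).

Definition liminf_ge (f : R -> R) (a : R) : Prop :=
  forall eps, 0 < eps -> exists T, forall t, T <= t -> a - eps <= f t.

Definition limsup_le (f : R -> R) (a : R) : Prop :=
  forall eps, 0 < eps -> exists T, forall t, T <= t -> f t <= a + eps.

(* Main.v *)
Require Import Defs.
From Stdlib Require Import Reals Lra Lia Classical.
From Coquelicot Require Import Coquelicot.
Open Scope R_scope.

Lemma pow2_pos k : 0 < 2 ^ k.
Proof. apply pow_lt; lra. Qed.

Lemma pow2_ge k : INR k <= 2 ^ k.
Proof.
  induction k. simpl; lra.
  rewrite S_INR. simpl. assert (1 <= 2^k). { clear IHk; induction k; simpl; lra. } lra.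
Qed.

Lemma small_geo A eps : 0 < eps -> exists N, A / 2 ^ N < eps.
Proof.
  intros He. destruct (INR_archimed eps A He) as [N HN].
  exists N. pose proof (pow2_pos N). pose proof (pow2_ge N).
  apply Rmult_lt_reg_r with (2^N); auto. unfold Rdiv. rewrite Rmult_assoc, Rinv_l by lra.
  nra.
Qed.

Lemma le_geo a b Q : (forall k, a <= b + Q / 2 ^ k) -> a <= b.
Proof.
  intros H. destruct (Rle_dec a b) as [|Hn]; auto.
  destruct (small_geo Q (a - b)) as [N HN]; [lra|]. specialize (H N). lra.
Qed.

Lemma geo_cauchy (u : nat -> R) A :
  (forall n, Rabs (u (S n) - u n) <= A / 2 ^ n) ->
  forall k n, (k <= n)%nat -> Rabs (u n - u k) <= 2 * A / 2 ^ k - 2 * A / 2 ^ n.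
Proof.
  intros H k n Hkn. induction Hkn.
  - rewrite Rminus_diag, Rabs_R0. lra.
  - specialize (H m). simpl pow.
    replace (u (S m) - u k) with ((u (S m) - u m) + (u m - u k)) by ring.
    eapply Rle_trans; [apply Rabs_triang|].
    pose proof (pow2_pos m).
    replace (2 * A / (2 * 2 ^ m)) with (A / 2^m) by (field; lra).
    replace (2 * A / 2 ^ m) with (A / 2^m + A / 2^m) by (field; lra). lra.
Qed.

Definition slim (u : nat -> R) : R := real (Lim_seq u).

Lemma geo_lim (u : nat -> R) A :
  (forall n, Rabs (u (S n) - u n) <= A / 2 ^ n) ->
  is_lim_seq u (slim u) /\ forall k, Rabs (slim u - u k) <= 2 * A / 2 ^ k.
Proof.
  intros H. pose proof (geo_cauchy u A H) as HC.
  assert (A0 : 0 <= A). { specialize (H 0%nat). simpl in H. pose proof (Rabs_pos (u 1%nat - u 0%nat)). lra. }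
  assert (Hex : ex_finite_lim_seq u).
  { apply ex_lim_seq_cauchy_corr. intros eps.
    destruct (small_geo (4 * A) eps (cond_pos eps)) as [N HN]. exists N.
    intros n m Hn Hm. pose proof (HC N n Hn). pose proof (HC N m Hm).
    pose proof (pow2_pos n). pose proof (pow2_pos m). pose proof (pow2_pos N).
    assert (0 <= 2 * A / 2 ^ n) by (apply Rmult_le_pos; [lra| left; apply Rinv_0_lt_compat; lra]).
    assert (0 <= 2 * A / 2 ^ m) by (apply Rmult_le_pos; [lra| left; apply Rinv_0_lt_compat; lra]).
    replace (u n - u m) with ((u n - u N) - (u m - u N)) by ring.
    eapply Rle_lt_trans; [apply Rabs_triang|]. rewrite Rabs_Ropp.
    replace (4 * A / 2 ^ N) with (2 * A / 2 ^ N + 2 * A / 2 ^ N) in HN by (field; lra). lra. }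
  destruct Hex as [l Hl].
  assert (Hs : slim u = l). { unfold slim. rewrite (is_lim_seq_unique _ _ Hl). reflexivity. }
  rewrite Hs. split; auto. intros k.
  destruct (Rle_dec (Rabs (l - u k)) (2 * A / 2 ^ k)) as [|Hn]; auto. exfalso.
  apply is_lim_seq_spec in Hl.
  assert (He : 0 < Rabs (l - u k) - 2 * A / 2 ^ k) by lra.
  destruct (Hl (mkposreal _ He)) as [N HN]. simpl in HN.
  specialize (HN (max N k) (Nat.le_max_l _ _)). specialize (HC k (max N k) (Nat.le_max_r _ _)).
  pose proof (pow2_pos (max N k)).
  assert (0 <= 2 * A / 2 ^ (max N k)) by (apply Rmult_le_pos; [lra| left; apply Rinv_0_lt_compat; lra]).
  pose proof (Rabs_triang (l - u (max N k)) (u (max N k) - u k)).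
  replace (l - u (max N k) + (u (max N k) - u k)) with (l - u k) in H2 by ring.
  rewrite <- Rabs_Ropp in HN. replace (- (u (max N k) - l)) with (l - u (max N k)) in HN by ring.
  lra.
Qed.

Lemma lip_cont (f : R -> R) C x : 0 <= C ->
  (forall s, Rabs (f s - f x) <= C * Rabs (s - x)) -> continuity_pt f x.
Proof.
  intros HC H. unfold continuity_pt, continue_in, limit1_in, limit_in. intros eps He.
  exists (eps / (C + 1)). split. apply Rdiv_lt_0_compat; lra.
  intros y [_ Hy]. simpl in *. unfold R_dist in *. eapply Rle_lt_trans; [apply H|].
  apply Rle_lt_trans with (C * (eps / (C+1))). apply Rmult_le_compat_l; lra.
  replace (C * (eps / (C+1))) with (eps * (C / (C+1))) by (field; lra).
  assert (C / (C+1) < 1). { apply Rmult_lt_reg_r with (C+1); [lra|]. unfold Rdiv. rewrite Rmult_assoc, Rinv_l by lra. lra. }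
  nra.
Qed.

Lemma lip_continuous (f : R -> R) C x : 0 <= C ->
  (forall s, Rabs (f s - f x) <= C * Rabs (s - x)) -> continuous f x.
Proof. intros. apply continuity_pt_filterlim. eapply lip_cont; eauto. Qed.

Lemma lip_ex_RInt (f : R -> R) C a b : 0 <= C ->
  (forall s t, Rabs (f s - f t) <= C * Rabs (s - t)) -> ex_RInt f a b.
Proof. intros HC H. apply (ex_RInt_continuous (V:=R_CompleteNormedModule)). intros z _. eapply lip_continuous; eauto. Qed.

Lemma Rmax0_lip t s : Rabs (Rmax 0 t - Rmax 0 s) <= Rabs (t - s).
Proof. unfold Rmax; destruct (Rle_dec 0 t), (Rle_dec 0 s); unfold Rabs; repeat destruct Rcase_abs; lra. Qed.

Lemma RInt_diff_bound (g : R -> R) C K a b : 0 <= C ->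
  (forall s t, Rabs (g s - g t) <= C * Rabs (s - t)) -> (forall s, Rabs (g s) <= K) ->
  Rabs (RInt g 0 a - RInt g 0 b) <= K * Rabs (a - b).
Proof.
  intros HC Hl HK.
  assert (Hex : forall u v, ex_RInt g u v) by (intros; eapply lip_ex_RInt; eauto).
  assert (E : RInt g 0 a - RInt g 0 b = RInt g b a).
  { rewrite <- (RInt_Chasles g 0 b a) by auto. change (plus (RInt g 0 b) (RInt g b a)) with (RInt g 0 b + RInt g b a). ring. }
  rewrite E. destruct (Rle_dec b a).
  - rewrite (Rabs_right (a - b)) by lra. rewrite Rmult_comm. apply abs_RInt_le_const; auto.
  - rewrite <- opp_RInt_swap by auto. change (opp (RInt g a b)) with (- RInt g a b). rewrite Rabs_Ropp.
    rewrite (Rabs_left1 (a - b)) by lra. replace (- (a - b)) with (b - a) by ring. rewrite Rmult_comm.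
    apply abs_RInt_le_const; auto; lra.
Qed.

Lemma RInt_abs_le (g h : R -> R) T : 0 <= T -> ex_RInt g 0 T -> ex_RInt h 0 T ->
  (forall s, 0 < s < T -> Rabs (g s) <= h s) -> Rabs (RInt g 0 T) <= RInt h 0 T.
Proof.
  intros HT Hg Hh H. apply Rabs_le. split.
  - assert (Hoh : ex_RInt (fun s => - h s) 0 T) by (exact (ex_RInt_opp (V:=R_CompleteNormedModule) h 0 T Hh)).
    assert (E : RInt (fun s => - h s) 0 T = - RInt h 0 T).
    { change (RInt (fun s => opp (h s)) 0 T = opp (RInt h 0 T)). exact (RInt_opp (V:=R_CompleteNormedModule) h 0 T Hh). }
    rewrite <- E. apply RInt_le; auto. intros x Hx. specialize (H x Hx). apply Rabs_le_between in H. lra.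
  - apply RInt_le; auto. intros x Hx. specialize (H x Hx). apply Rabs_le_between in H. lra.
Qed.

Lemma RInt_exp c lam T : 0 < lam ->
  RInt (fun s => c * exp (lam * s)) 0 T = c * (exp (lam * T) - 1) / lam.
Proof.
  intros Hl. apply is_RInt_unique.
  replace (c * (exp (lam * T) - 1) / lam) with (minus (c / lam * exp (lam * T)) (c / lam * exp (lam * 0))).
  2:{ rewrite Rmult_0_r, exp_0. change (c / lam * exp (lam * T) - c/lam*1 = c * (exp (lam * T) - 1) / lam). field. lra. }
  apply (is_RInt_derive (fun s => c / lam * exp (lam * s))).
  - intros x _. auto_derive; auto. field. lra.
  - intros x _. apply continuity_pt_filterlim. apply derivable_continuous_pt.
    exists (c * (lam * exp (lam * x))). apply is_derive_Reals. auto_derive; auto. ring.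
Qed.

Lemma mvt_open (f df : R -> R) a b : a < b ->
  (forall c, a <= c <= b -> continuity_pt f c) ->
  (forall c, a < c < b -> derivable_pt_lim f c (df c)) ->
  exists c, a < c < b /\ f b - f a = df c * (b - a).
Proof.
  intros Hab Hc Hd.
  assert (pr1 : forall c, a < c < b -> derivable_pt f c) by (intros c Hc'; exists (df c); apply Hd; auto).
  assert (pr2 : forall c, a < c < b -> derivable_pt id c) by (intros; apply derivable_pt_id).
  destruct (MVT f id a b pr1 pr2 Hab Hc) as [c [P HP]].
  intros; apply derivable_continuous_pt, derivable_pt_id.
  exists c. split; auto.
  rewrite (derive_pt_eq_0 f c (df c) (pr1 c P) (Hd c P)) in HP.
  rewrite (derive_pt_eq_0 id c 1 (pr2 c P) (derivable_pt_lim_id c)) in HP. unfold id in HP. lra.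
Qed.


Inductive idx := iB | iI | iM | iN.
Definition st := idx -> R.
Definition nrm (u v : st) : R :=
  Rabs (u iB - v iB) + Rabs (u iI - v iI) + Rabs (u iM - v iM) + Rabs (u iN - v iN).

Lemma nrm_comp u v i : Rabs (u i - v i) <= nrm u v.
Proof.
  unfold nrm. pose proof (Rabs_pos (u iB - v iB)). pose proof (Rabs_pos (u iI - v iI)).
  pose proof (Rabs_pos (u iM - v iM)). pose proof (Rabs_pos (u iN - v iN)). destruct i; lra.
Qed.

Lemma comp_nrm u v a : (forall i, Rabs (u i - v i) <= a) -> nrm u v <= 4 * a.
Proof. intros H. unfold nrm. pose proof (H iB). pose proof (H iI). pose proof (H iM). pose proof (H iN). lra. Qed.

Definition FLip (F : st -> st) (L K : R) : Prop :=
  0 <= L /\ 0 <= K /\ (forall u v i, Rabs (F u i - F v i) <= L * nrm u v) /\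
  (forall u i, Rabs (F u i) <= K).

Fixpoint pic (F : st -> st) (x0 : st) (k : nat) (t : R) : st :=
  match k with
  | O => x0
  | S k => fun i => x0 i + RInt (fun s => F (pic F x0 k s) i) 0 (Rmax 0 t)
  end.

Lemma Rmax0_pos t : 0 <= t -> Rmax 0 t = t.
Proof. intros; unfold Rmax; destruct Rle_dec; lra. Qed.
Lemma Rmax0_ge t : 0 <= Rmax 0 t.
Proof. unfold Rmax; destruct Rle_dec; lra. Qed.

Lemma compF_lip F L K (H : FLip F L K) (y : R -> st) C i :
  0 <= C -> (forall t s j, Rabs (y t j - y s j) <= C * Rabs (t - s)) ->
  forall s t, Rabs (F (y s) i - F (y t) i) <= (4 * C * L) * Rabs (s - t).
Proof.
  intros HC Hy s t. destruct H as [HL [HK [Hl Hb]]].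
  eapply Rle_trans; [apply Hl|].
  pose proof (comp_nrm (y s) (y t) (C * Rabs (s - t)) (fun j => Hy s t j)).
  replace (4 * C * L * Rabs (s - t)) with (L * (4 * (C * Rabs (s - t)))) by ring.
  apply Rmult_le_compat_l; auto.
Qed.

Lemma pic_lip F L K x0 (H : FLip F L K) k : forall t s i,
  Rabs (pic F x0 k t i - pic F x0 k s i) <= K * Rabs (t - s).
Proof.
  pose proof H as [HL [HK [Hl Hb]]].
  induction k; intros t s i.
  - simpl. rewrite Rminus_diag, Rabs_R0. apply Rmult_le_pos; auto; apply Rabs_pos.
  - simpl. replace (x0 i + RInt (fun s0 => F (pic F x0 k s0) i) 0 (Rmax 0 t) -
      (x0 i + RInt (fun s0 => F (pic F x0 k s0) i) 0 (Rmax 0 s)))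
      with (RInt (fun s0 => F (pic F x0 k s0) i) 0 (Rmax 0 t) -
      RInt (fun s0 => F (pic F x0 k s0) i) 0 (Rmax 0 s)) by ring.
    eapply Rle_trans. apply (RInt_diff_bound _ (4 * K * L)).
    + apply Rmult_le_pos; lra.
    + apply (compF_lip F L K H); auto.
    + intros; apply Hb.
    + apply Rmult_le_compat_l; auto. apply Rmax0_lip.
Qed.

Lemma g_ex_RInt F L K (H : FLip F L K) (y : R -> st) C i a b :
  0 <= C -> (forall t s j, Rabs (y t j - y s j) <= C * Rabs (t - s)) ->
  ex_RInt (fun s => F (y s) i) a b.
Proof.
  intros HC Hy. pose proof H as [HL _]. eapply (lip_ex_RInt _ (4 * C * L)).
  apply Rmult_le_pos; lra. apply (compF_lip F L K H); auto.
Qed.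

Definition lamL (L : R) := 8 * L + 1.

Lemma exp_mono_le a b : a <= b -> exp a <= exp b.
Proof. intros [H|H]. left; apply exp_increasing; auto. subst; lra. Qed.

Lemma exp_cont_ex c lam a b : ex_RInt (fun s => c * exp (lam * s)) a b.
Proof.
  apply (ex_RInt_continuous (V:=R_CompleteNormedModule)). intros x _.
  apply continuity_pt_filterlim. apply derivable_continuous_pt.
  exists (c * (lam * exp (lam * x))). apply is_derive_Reals. auto_derive; auto. ring.
Qed.

Lemma pic_diff F L K x0 (H : FLip F L K) k : forall t,
  nrm (pic F x0 (S k) t) (pic F x0 k t) <= 4 * K * exp (lamL L * Rmax 0 t) / 2 ^ k.
Proof.
  pose proof H as [HL [HK [Hl Hb]]].
  assert (Hlam : 1 <= lamL L) by (unfold lamL; lra).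
  induction k; intros t; set (T := Rmax 0 t); assert (HT : 0 <= T) by apply Rmax0_ge.
  - simpl pow. rewrite Rdiv_1_r. replace (4 * K * exp (lamL L * T)) with (4 * (K * exp (lamL L * T))) by ring.
    apply comp_nrm. intros i. simpl. fold T.
    replace (x0 i + RInt (fun s => F x0 i) 0 T - x0 i) with (RInt (fun s => F x0 i) 0 T - RInt (fun s => F x0 i) 0 0).
    2:{ rewrite RInt_point. change (zero : R_CompleteNormedModule) with 0. ring. }
    eapply Rle_trans. apply (RInt_diff_bound _ 0 K). lra. intros; rewrite Rminus_diag, Rabs_R0; lra. intros; apply Hb.
    apply Rmult_le_compat_l; auto. rewrite Rminus_0_r, Rabs_right by lra.
    pose proof (exp_ineq1_le T). pose proof (exp_mono_le T (lamL L * T)). nra.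
  - set (A := L * (4 * K / 2 ^ k)).
    assert (HA : 0 <= A). { unfold A. pose proof (pow2_pos k). apply Rmult_le_pos; auto. apply Rdiv_le_0_compat; lra. }
    assert (Hc : forall i, Rabs (pic F x0 (S (S k)) t i - pic F x0 (S k) t i) <= A * (exp (lamL L * T) - 1) / lamL L).
    { intros i. rewrite <- RInt_exp by lra. simpl pic. fold T.
      set (g1 := fun s => F (fun i0 => x0 i0 + RInt (fun s0 => F (pic F x0 k s0) i0) 0 (Rmax 0 s)) i).
      set (g0 := fun s => F (pic F x0 k s) i).
      assert (E1 : ex_RInt g1 0 T). { apply (g_ex_RInt F L K H (pic F x0 (S k)) K); auto. exact (pic_lip F L K x0 H _). }
      assert (E0 : ex_RInt g0 0 T). { apply (g_ex_RInt F L K H (pic F x0 k) K); auto. exact (pic_lip F L K x0 H _). }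
      replace (x0 i + RInt g1 0 T - (x0 i + RInt g0 0 T)) with (RInt (fun s => g1 s - g0 s) 0 T).
      2:{ pose proof (RInt_minus (V:=R_CompleteNormedModule) g1 g0 0 T E1 E0) as Hm.
          change (RInt (fun x => g1 x - g0 x) 0 T = RInt g1 0 T - RInt g0 0 T) in Hm. change (@eq R (RInt (fun x => g1 x - g0 x) 0 T) (x0 i + RInt g1 0 T - (x0 i + RInt g0 0 T))). rewrite Hm. ring. }
      apply RInt_abs_le; auto.
      - apply (ex_RInt_minus (V:=R_CompleteNormedModule)); auto.
      - apply exp_cont_ex.
      - intros s Hs. unfold g1, g0. eapply Rle_trans; [apply Hl|]. unfold A. rewrite Rmult_assoc. apply Rmult_le_compat_l; auto.
        pose proof (IHk s) as Hk. rewrite Rmax0_pos in Hk by lra. simpl pic in Hk.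
        unfold Rdiv in *. lra. }
    eapply Rle_trans. apply comp_nrm. exact Hc.
    pose proof (pow2_pos k). simpl pow.
    assert (E : 1 <= exp (lamL L * T)). { rewrite <- exp_0. apply exp_mono_le. nra. }
    unfold A. unfold lamL in *.
    replace (4 * (L * (4 * K / 2 ^ k) * (exp ((8 * L + 1) * T) - 1) / (8 * L + 1)))
      with ((16 * L / (8 * L + 1)) * (K / 2 ^ k) * (exp ((8 * L + 1) * T) - 1)) by (field; lra).
    replace (4 * K * exp ((8 * L + 1) * T) / (2 * 2 ^ k)) with (2 * (K / 2 ^ k) * exp ((8 * L + 1) * T)) by (field; lra).
    assert (16 * L / (8 * L + 1) <= 2).
    { apply Rmult_le_reg_r with (8 * L + 1); [lra|]. unfold Rdiv. rewrite Rmult_assoc, Rinv_l by lra. lra. }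
    assert (0 <= K / 2 ^ k) by (apply Rdiv_le_0_compat; lra).
    assert (0 <= 16 * L / (8 * L + 1)) by (apply Rdiv_le_0_compat; lra).
    set (q := K / 2 ^ k) in *. set (E' := exp ((8 * L + 1) * T)) in *. set (c := 16 * L / (8 * L + 1)) in *.
    assert (c * q <= 2 * q) by nra. nra.
Qed.

Definition sol F x0 (t : R) : st := fun i => slim (fun k => pic F x0 k t i).

Definition Abnd K L t := 4 * K * exp (lamL L * Rmax 0 t).

Lemma sol_tail F L K x0 (H : FLip F L K) t i k :
  Rabs (sol F x0 t i - pic F x0 k t i) <= 2 * Abnd K L t / 2 ^ k.
Proof.
  apply (geo_lim (fun k => pic F x0 k t i) (Abnd K L t)).
  intros n. eapply Rle_trans; [apply nrm_comp| exact (pic_diff F L K x0 H n t)].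
Qed.

Lemma sol_lip F L K x0 (H : FLip F L K) t s i :
  Rabs (sol F x0 t i - sol F x0 s i) <= K * Rabs (t - s).
Proof.
  apply (le_geo _ _ (2 * Abnd K L t + 2 * Abnd K L s)). intros k.
  pose proof (sol_tail F L K x0 H t i k). pose proof (sol_tail F L K x0 H s i k).
  pose proof (pic_lip F L K x0 H k t s i).
  pose proof (Rabs_triang (sol F x0 t i - pic F x0 k t i) (pic F x0 k t i - pic F x0 k s i)).
  pose proof (Rabs_triang (sol F x0 t i - pic F x0 k t i + (pic F x0 k t i - pic F x0 k s i)) (pic F x0 k s i - sol F x0 s i)).
  replace (sol F x0 t i - pic F x0 k t i + (pic F x0 k t i - pic F x0 k s i) + (pic F x0 k s i - sol F x0 s i))
    with (sol F x0 t i - sol F x0 s i) in H4 by ring.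
  rewrite <- Rabs_Ropp in H1. replace (- (sol F x0 s i - pic F x0 k s i)) with (pic F x0 k s i - sol F x0 s i) in H1 by ring.
  pose proof (pow2_pos k).
  replace ((2 * Abnd K L t + 2 * Abnd K L s) / 2 ^ k) with (2 * Abnd K L t / 2 ^ k + 2 * Abnd K L s / 2 ^ k) by (field; lra).
  lra.
Qed.

Lemma sol_int F L K x0 (H : FLip F L K) t i :
  sol F x0 t i = x0 i + RInt (fun s => F (sol F x0 s) i) 0 (Rmax 0 t).
Proof.
  pose proof H as [HL [HK [Hl Hb]]].
  set (T := Rmax 0 t). assert (HT : 0 <= T) by apply Rmax0_ge.
  set (G := fun s => F (sol F x0 s) i).
  assert (EG : ex_RInt G 0 T) by (apply (g_ex_RInt F L K H (sol F x0) K); auto; intros; exact (sol_lip F L K x0 H _ _ _)).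
  set (Q := 2 * Abnd K L t + T * (L * (32 * K * exp (lamL L * T)))).
  assert (Hk : forall k, Rabs (sol F x0 t i - (x0 i + RInt G 0 T)) <= 0 + Q / 2 ^ k).
  { intros k. pose proof (sol_tail F L K x0 H t i (S k)) as Ht. simpl pic in Ht. fold T in Ht.
    set (g := fun s => F (pic F x0 k s) i) in *.
    assert (Eg : ex_RInt g 0 T) by (apply (g_ex_RInt F L K H (pic F x0 k) K); auto; exact (pic_lip F L K x0 H _)).
    assert (Hd : Rabs (RInt (fun s => g s - G s) 0 T) <= (T - 0) * (L * (32 * K * exp (lamL L * T)) / 2 ^ k)).
    { apply abs_RInt_le_const; auto. apply (ex_RInt_minus (V:=R_CompleteNormedModule)); auto.
      intros s Hs. unfold g, G. eapply Rle_trans; [apply Hl|].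
      replace (L * (32 * K * exp (lamL L * T)) / 2 ^ k) with (L * (32 * K * exp (lamL L * T) / 2 ^ k)) by (unfold Rdiv; ring).
      apply Rmult_le_compat_l; auto.
      apply Rle_trans with (4 * (2 * Abnd K L s / 2 ^ k)).
      - apply comp_nrm. intros j. rewrite <- Rabs_Ropp. replace (- (pic F x0 k s j - sol F x0 s j)) with (sol F x0 s j - pic F x0 k s j) by ring.
        apply sol_tail; auto.
      - unfold Abnd. rewrite Rmax0_pos by lra. pose proof (pow2_pos k).
        pose proof (exp_mono_le (lamL L * s) (lamL L * T)). assert (lamL L * s <= lamL L * T) by (unfold lamL; nra).
        unfold Rdiv. pose proof (Rinv_0_lt_compat _ H0).
        assert (K * exp (lamL L * s) <= K * exp (lamL L * T)) by (apply Rmult_le_compat_l; auto).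
        set (iv := / 2 ^ k) in *. set (e1 := K * exp (lamL L * s)) in *. set (e2 := K * exp (lamL L * T)) in *.
        replace (4 * (2 * (4 * K * exp (lamL L * s)) * iv)) with (32 * (e1 * iv)) by (unfold e1; ring).
        replace (32 * K * exp (lamL L * T) * iv) with (32 * (e2 * iv)) by (unfold e2; ring).
        apply Rmult_le_compat_l; [lra|]. apply Rmult_le_compat_r; lra. }
    assert (Em : RInt (fun s => g s - G s) 0 T = RInt g 0 T - RInt G 0 T).
    { pose proof (RInt_minus (V:=R_CompleteNormedModule) g G 0 T Eg EG) as Hm. exact Hm. }
    rewrite Em in Hd. pose proof (pow2_pos k). simpl pow in Ht.
    replace (sol F x0 t i - (x0 i + RInt G 0 T)) with ((sol F x0 t i - (x0 i + RInt g 0 T)) + (RInt g 0 T - RInt G 0 T)) by ring.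
    eapply Rle_trans; [apply Rabs_triang|].
    assert (2 * Abnd K L t / (2 * 2 ^ k) <= 2 * Abnd K L t / 2 ^ k).
    { unfold Abnd. apply Rmult_le_compat_l. pose proof (exp_pos (lamL L * Rmax 0 t)). nra.
      apply Rinv_le_contravar; lra. }
    unfold Q. replace ((2 * Abnd K L t + T * (L * (32 * K * exp (lamL L * T)))) / 2 ^ k)
     with (2 * Abnd K L t / 2 ^ k + (T - 0) * (L * (32 * K * exp (lamL L * T)) / 2 ^ k)) by (field; lra).
    lra. }
  apply le_geo in Hk. pose proof (Rabs_pos (sol F x0 t i - (x0 i + RInt G 0 T))).
  assert (Rabs (sol F x0 t i - (x0 i + RInt G 0 T)) = 0) by lra.
  apply Rabs_eq_0 in H1. lra.
Qed.

Lemma sol_cont F L K x0 (H : FLip F L K) i t : continuity_pt (fun s => sol F x0 s i) t.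
Proof. pose proof H as [HL [HK _]]. apply (lip_cont _ K); auto. intros; exact (sol_lip F L K x0 H _ _ _). Qed.

Lemma sol_0 F L K x0 (H : FLip F L K) i : sol F x0 0 i = x0 i.
Proof.
  rewrite (sol_int F L K x0 H). rewrite Rmax0_pos by lra. rewrite RInt_point.
  change (zero : R_CompleteNormedModule) with 0. ring.
Qed.

Lemma locally_pos t : 0 < t -> locally t (fun u => 0 < u).
Proof. intros Ht. apply (open_gt 0). auto. Qed.

Lemma sol_deriv F L K x0 (H : FLip F L K) i t : 0 < t ->
  derivable_pt_lim (fun s => sol F x0 s i) t (F (sol F x0 t) i).
Proof.
  intros Ht. pose proof H as [HL [HK _]].
  set (G := fun s => F (sol F x0 s) i).
  assert (EG : forall a b, ex_RInt G a b) by (intros; apply (g_ex_RInt F L K H (sol F x0) K); auto; intros; exact (sol_lip F L K x0 H _ _ _)).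
  apply is_derive_Reals.
  apply (is_derive_ext_loc (fun s => x0 i + RInt G 0 s)).
  { generalize (locally_pos t Ht). apply filter_imp. intros u Hu. rewrite (sol_int F L K x0 H u i).
    rewrite Rmax0_pos by lra. reflexivity. }
  apply is_derive_Reals.
  replace (F (sol F x0 t) i) with (0 + G t) by (unfold G; ring).
  apply (derivable_pt_lim_plus (fun _ => x0 i) (fun s => RInt G 0 s)).
  apply derivable_pt_lim_const.
  apply is_derive_Reals.
  apply (is_derive_RInt G (fun s => RInt G 0 s) 0).
  - apply filter_forall. intros b. exact (RInt_correct (V:=R_CompleteNormedModule) G 0 b (EG 0 b)).
  - apply (lip_continuous _ (4 * K * L)). apply Rmult_le_pos; lra.
    intros s. apply (compF_lip F L K H (sol F x0) K); auto. intros; exact (sol_lip F L K x0 H _ _ _).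
Qed.


Definition LB (G : st -> R) : Prop :=
  exists L K, 0 <= L /\ 0 <= K /\ (forall u v, Rabs (G u - G v) <= L * nrm u v) /\ (forall u, Rabs (G u) <= K).

Lemma LB_const c : LB (fun _ => c).
Proof.
  exists 0, (Rabs c). repeat split; try lra. apply Rabs_pos.
  intros; rewrite Rminus_diag, Rabs_R0; lra. intros; lra.
Qed.

Definition clip lo hi x := Rmax lo (Rmin hi x).

Lemma clip_lip lo hi x y : Rabs (clip lo hi x - clip lo hi y) <= Rabs (x - y).
Proof. unfold clip, Rmax, Rmin; repeat destruct Rle_dec; unfold Rabs; repeat destruct Rcase_abs; lra. Qed.
Lemma clip_bnd lo hi x : lo <= hi -> lo <= clip lo hi x <= hi.
Proof. unfold clip, Rmax, Rmin; repeat destruct Rle_dec; lra. Qed.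
Lemma clip_id lo hi x : lo <= x <= hi -> clip lo hi x = x.
Proof. unfold clip, Rmax, Rmin; repeat destruct Rle_dec; lra. Qed.

Lemma LB_clip lo hi i : lo <= hi -> LB (fun u => clip lo hi (u i)).
Proof.
  intros H. exists 1, (Rabs lo + Rabs hi). repeat split; try lra.
  pose proof (Rabs_pos lo); pose proof (Rabs_pos hi); lra.
  intros u v. eapply Rle_trans; [apply clip_lip|]. rewrite Rmult_1_l; apply nrm_comp.
  intros u. pose proof (clip_bnd lo hi (u i) H). unfold Rabs; repeat destruct Rcase_abs; lra.
Qed.

Lemma LB_add G1 G2 : LB G1 -> LB G2 -> LB (fun u => G1 u + G2 u).
Proof.
  intros [L1 [K1 [? [? [? ?]]]]] [L2 [K2 [? [? [? ?]]]]]. exists (L1 + L2), (K1 + K2).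
  repeat split; try lra.
  - intros u v. replace (G1 u + G2 u - (G1 v + G2 v)) with ((G1 u - G1 v) + (G2 u - G2 v)) by ring.
    eapply Rle_trans; [apply Rabs_triang|]. specialize (H1 u v). specialize (H5 u v). lra.
  - intros u. eapply Rle_trans; [apply Rabs_triang|]. specialize (H2 u). specialize (H6 u). lra.
Qed.

Lemma LB_opp G : LB G -> LB (fun u => - G u).
Proof.
  intros [L [K [? [? [? ?]]]]]. exists L, K. repeat split; auto.
  intros u v. replace (- G u - - G v) with (- (G u - G v)) by ring. rewrite Rabs_Ropp; auto.
  intros u. rewrite Rabs_Ropp; auto.
Qed.

Lemma LB_sub G1 G2 : LB G1 -> LB G2 -> LB (fun u => G1 u - G2 u).
Proof. intros. apply (LB_add G1 (fun u => - G2 u)); auto. apply LB_opp; auto. Qed.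

Lemma LB_mul G1 G2 : LB G1 -> LB G2 -> LB (fun u => G1 u * G2 u).
Proof.
  intros [L1 [K1 [? [? [? ?]]]]] [L2 [K2 [? [? [? ?]]]]]. exists (K1 * L2 + K2 * L1), (K1 * K2).
  repeat split; try nra.
  - intros u v. replace (G1 u * G2 u - G1 v * G2 v) with (G1 u * (G2 u - G2 v) + G2 v * (G1 u - G1 v)) by ring.
    eapply Rle_trans; [apply Rabs_triang|]. rewrite !Rabs_mult.
    specialize (H1 u v). specialize (H5 u v). specialize (H2 u). specialize (H6 v).
    pose proof (Rabs_pos (G1 u)). pose proof (Rabs_pos (G2 v)). pose proof (Rabs_pos (G2 u - G2 v)). pose proof (Rabs_pos (G1 u - G1 v)).
    assert (Rabs (G1 u) * Rabs (G2 u - G2 v) <= K1 * (L2 * nrm u v)) by (apply Rmult_le_compat; auto).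
    assert (Rabs (G2 v) * Rabs (G1 u - G1 v) <= K2 * (L1 * nrm u v)) by (apply Rmult_le_compat; auto).
    lra.
  - intros u. rewrite Rabs_mult. apply Rmult_le_compat; auto; apply Rabs_pos.
Qed.

Lemma LB_max c G : LB G -> LB (fun u => Rmax c (G u)).
Proof.
  intros [L [K [? [? [? ?]]]]]. exists L, (K + Rabs c). repeat split; auto.
  pose proof (Rabs_pos c); lra.
  intros u v. eapply Rle_trans; [|apply H1]. unfold Rmax; repeat destruct Rle_dec; unfold Rabs; repeat destruct Rcase_abs; lra.
  intros u. specialize (H2 u). revert H2. unfold Rmax; repeat destruct Rle_dec; unfold Rabs; repeat destruct Rcase_abs; lra.
Qed.

Lemma LB_inv G c : 0 < c -> (forall u, c <= G u) -> LB G -> LB (fun u => / G u).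
Proof.
  intros Hc Hg [L [K [? [? [? ?]]]]]. exists (L / (c * c)), (/ c). repeat split.
  - apply Rdiv_le_0_compat; nra.
  - left; apply Rinv_0_lt_compat; auto.
  - intros u v. pose proof (Hg u). pose proof (Hg v).
    replace (/ G u - / G v) with ((G v - G u) / (G u * G v)) by (field; lra).
    unfold Rdiv. rewrite Rabs_mult, Rabs_inv. rewrite <- Rabs_Ropp, Ropp_minus_distr.
    rewrite (Rabs_right (G u * G v)) by nra.
    assert (/ (G u * G v) <= / (c * c)) by (apply Rinv_le_contravar; nra).
    pose proof (H1 u v). pose proof (Rabs_pos (G u - G v)).
    replace (L * / (c * c) * nrm u v) with (L * nrm u v * / (c*c)) by ring.
    apply Rmult_le_compat; auto. left; apply Rinv_0_lt_compat; nra.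
  - intros u. pose proof (Hg u). rewrite Rabs_inv, Rabs_right by lra. apply Rinv_le_contravar; lra.
Qed.

Lemma LB_FLip (F : st -> st) : (forall i, LB (fun u => F u i)) -> exists L K, FLip F L K.
Proof.
  intros H. destruct (H iB) as [L1 [K1 [? [? [? ?]]]]]. destruct (H iI) as [L2 [K2 [? [? [? ?]]]]].
  destruct (H iM) as [L3 [K3 [? [? [? ?]]]]]. destruct (H iN) as [L4 [K4 [? [? [? ?]]]]].
  exists (L1 + L2 + L3 + L4), (K1 + K2 + K3 + K4). repeat split; try lra.
  - intros u v i. pose proof (Rabs_pos (F u i - F v i)). assert (0 <= nrm u v) by (eapply Rle_trans; [apply Rabs_pos|apply (nrm_comp u v iB)]).
    destruct i; [specialize (H2 u v)|specialize (H6 u v)|specialize (H10 u v)|specialize (H14 u v)]; nra.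
  - intros u i. destruct i; [specialize (H3 u)|specialize (H7 u)|specialize (H11 u)|specialize (H15 u)]; lra.
Qed.

Record Prm := { b_ : R; lam_ : R; gam_ : R; m_ : R; mu_ : R; r_ : R; n_ : R; p_ : R; h_ : R;
  be_ : R; de_ : R; e_ : R }.

Definition Fc (P : Prm) (sg Sm U W : R) (u : st) : st :=
  let cB := clip (- sg) (U + sg) (u iB) in
  let cI := clip (- sg) (U + sg) (u iI) in
  let cM := clip (- sg) (W + sg) (u iM) in
  let cN := clip (- sg) (W + sg) (u iN) in
  let D := Rmax Sm (cB + cI) in
  fun i => match i with
  | iB => b_ P * cB * / D - lam_ P * cB * cN - gam_ P * cB * cI - m_ P * cB
  | iI => b_ P * cI * / D + lam_ P * cB * cN + gam_ P * cB * cI - (m_ P + mu_ P) * cI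
  | iM => r_ P * (cM + cN) - n_ P * cM - p_ P * / (h_ P * D) * cM * (cM + cN)
          - cM * (be_ P * cI + de_ P * cN + e_ P * cB)
  | iN => - n_ P * cN - p_ P * / (h_ P * D) * cN * (cM + cN) + be_ P * cM * cI
          + de_ P * cM * cN - e_ P * cN * cB
  end.

Lemma Fc_lip P sg Sm U W : 0 <= sg -> 0 < Sm -> 0 <= U -> 0 <= W -> 0 < h_ P ->
  exists L K, FLip (Fc P sg Sm U W) L K.
Proof.
  intros Hs HS HU HW Hh. apply LB_FLip.
  assert (C1 : LB (fun u => clip (- sg) (U + sg) (u iB))) by (apply LB_clip; lra).
  assert (C2 : LB (fun u => clip (- sg) (U + sg) (u iI))) by (apply LB_clip; lra).
  assert (C3 : LB (fun u => clip (- sg) (W + sg) (u iM))) by (apply LB_clip; lra).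
  assert (C4 : LB (fun u => clip (- sg) (W + sg) (u iN))) by (apply LB_clip; lra).
  assert (HD : LB (fun u => Rmax Sm (clip (- sg) (U + sg) (u iB) + clip (- sg) (U + sg) (u iI)))).
  { apply LB_max. apply LB_add; auto. }
  assert (HDg : forall u, Sm <= Rmax Sm (clip (- sg) (U + sg) (u iB) + clip (- sg) (U + sg) (u iI))) by (intros; apply Rmax_l).
  assert (HiD : LB (fun u => / Rmax Sm (clip (- sg) (U + sg) (u iB) + clip (- sg) (U + sg) (u iI)))).
  { apply (LB_inv _ Sm); auto. }
  assert (HihD : LB (fun u => / (h_ P * Rmax Sm (clip (- sg) (U + sg) (u iB) + clip (- sg) (U + sg) (u iI))))).
  { apply (LB_inv _ (h_ P * Sm)). nra. intros u; apply Rmult_le_compat_l; [lra|apply HDg].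
    apply LB_mul; auto. apply LB_const. }
  pose proof (LB_const (b_ P)). pose proof (LB_const (lam_ P)). pose proof (LB_const (gam_ P)).
  pose proof (LB_const (m_ P)). pose proof (LB_const (m_ P + mu_ P)). pose proof (LB_const (r_ P)).
  pose proof (LB_const (n_ P)). pose proof (LB_const (- n_ P)). pose proof (LB_const (p_ P)). pose proof (LB_const (be_ P)).
  pose proof (LB_const (de_ P)). pose proof (LB_const (e_ P)).
  intros i; destruct i; unfold Fc; cbv zeta;
  repeat first [ assumption | apply LB_sub | apply LB_add | apply LB_mul | apply LB_opp ].
Qed.

Definition fvec (P : Prm) (u : st) : st := fun i => match i with
  | iB => fB (b_ P) (lam_ P) (gam_ P) (m_ P) (u iB) (u iI) (u iM) (u iN)
  | iI => fI (b_ P) (lam_ P) (gam_ P) (m_ P) (mu_ P) (u iB) (u iI) (u iM) (u iN)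
  | iM => fM (r_ P) (n_ P) (p_ P) (h_ P) (be_ P) (de_ P) (e_ P) (u iB) (u iI) (u iM) (u iN)
  | iN => fN (n_ P) (p_ P) (h_ P) (be_ P) (de_ P) (e_ P) (u iB) (u iI) (u iM) (u iN)
  end.

Lemma Fc_eq P sg Sm U W (u : st) :
  - sg <= u iB <= U + sg -> - sg <= u iI <= U + sg -> - sg <= u iM <= W + sg -> - sg <= u iN <= W + sg ->
  Sm <= u iB + u iI -> forall i, Fc P sg Sm U W u i = fvec P u i.
Proof.
  intros H1 H2 H3 H4 H5 i. unfold Fc. cbv zeta.
  rewrite !(clip_id (- sg) (U + sg)) by lra. rewrite !(clip_id (- sg) (W + sg)) by lra.
  rewrite Rmax_right by lra.
  destruct i; unfold fvec, fB, fI, fM, fN, Rdiv; ring.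
Qed.


Lemma nonneg_inv (y dy : R -> R) :
  (forall t, continuity_pt y t) -> (forall t, 0 < t -> derivable_pt_lim y t (dy t)) ->
  0 <= y 0 -> (forall t, 0 < t -> y t < 0 -> 0 <= dy t) -> forall t, 0 <= t -> 0 <= y t.
Proof.
  intros Hc Hd H0 Hs t1 Ht1. destruct (Rle_dec 0 (y t1)) as [|Hn]; auto. exfalso.
  set (E := fun s => 0 <= s <= t1 /\ 0 <= y s).
  assert (Hb : bound E) by (exists t1; intros s [Hs' _]; lra).
  assert (He : exists s, E s) by (exists 0; split; lra).
  destruct (completeness E Hb He) as [s Hl].
  assert (Hs0 : 0 <= s) by (apply Hl; split; lra).
  assert (Hst : s <= t1) by (apply Hl; intros u [Hu _]; lra).
  assert (Hys : 0 <= y s).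
  { destruct (Rle_dec 0 (y s)) as [|Hn2]; auto. exfalso.
    destruct (Hc s (- y s)) as [d [Hd0 Hd1]]; [lra|].
    destruct (classic (exists u, E u /\ s - d < u)) as [[u [Eu Hu]]|Hno].
    - assert (u <= s) by (apply Hl; auto). destruct (Req_dec u s) as [->|Hne].
      + destruct Eu; lra.
      + specialize (Hd1 u). simpl in Hd1. unfold R_dist in Hd1. destruct Eu as [_ Eu].
        assert (Hab : Rabs (y u - y s) < - y s). { apply Hd1. split; [split; [exact I| intro; apply Hne; auto] | simpl; unfold R_dist; rewrite Rabs_left; lra]. }
        revert Hab. unfold Rabs; destruct Rcase_abs; lra.
    - assert (s <= s - d). { apply Hl. intros u Eu. destruct (Rle_dec u (s - d)); auto. exfalso; apply Hno; exists u; split; auto; lra. }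
      lra. }
  assert (Hlt : s < t1) by (destruct (Req_dec s t1); subst; lra).
  assert (Hneg : forall u, s < u <= t1 -> y u < 0).
  { intros u Hu. destruct (Rlt_dec (y u) 0); auto. assert (u <= s) by (apply Hl; split; lra). lra. }
  destruct (mvt_open y dy s t1 Hlt) as [c [Hc1 Hc2]].
  - intros; apply Hc.
  - intros c Hc'; apply Hd; lra.
  - assert (0 <= dy c) by (apply Hs; [lra| apply Hneg; lra]). nra.
Qed.

Lemma exp_lower (y dy : R -> R) c :
  (forall t, continuity_pt y t) -> (forall t, 0 < t -> derivable_pt_lim y t (dy t)) ->
  (forall t, 0 < t -> - c * y t <= dy t) -> forall t, 0 <= t -> y 0 * exp (- c * t) <= y t.
Proof.
  intros Hc Hd Hs t Ht.
  set (w := fun s => y s * exp (c * s)).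
  assert (Hw : forall s, 0 <= s -> w 0 <= w s).
  { intros s Hs0. destruct (Req_dec s 0) as [->|Hne]; [lra|].
    destruct (mvt_open w (fun u => dy u * exp (c * u) + y u * (c * exp (c * u))) 0 s) as [u [Hu1 Hu2]]; [lra| | |].
    - intros u _. unfold w. apply continuity_pt_mult; auto.
      apply derivable_continuous_pt. exists (c * exp (c * u)). apply is_derive_Reals. auto_derive; auto. ring.
    - intros u Hu. unfold w. apply (derivable_pt_lim_mult y (fun s => exp (c * s))). apply Hd; lra.
      apply is_derive_Reals. auto_derive; auto. ring.
    - specialize (Hs u (proj1 Hu1)). pose proof (exp_pos (c * u)).
      assert (0 <= dy u * exp (c * u) + y u * (c * exp (c * u))) by nra. nra. }
  specialize (Hw t Ht). unfold w in Hw. rewrite Rmult_0_r, exp_0, Rmult_1_r in Hw.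
  replace (y t) with (y t * exp (c * t) * exp (- c * t)).
  2:{ rewrite Rmult_assoc, <- exp_plus. replace (c * t + - c * t) with 0 by ring. rewrite exp_0; ring. }
  apply Rmult_le_compat_r; auto. left; apply exp_pos.
Qed.

Lemma exp_eventually y0 c eps : 0 < c -> 0 < eps -> exists T, forall t, T <= t -> - eps <= y0 * exp (- c * t).
Proof.
  intros Hc He. destruct (Rle_dec 0 y0).
  - exists 0. intros t _. pose proof (exp_pos (- c * t)). nra.
  - exists (- y0 / (eps * c)). intros t Ht.
    assert (Hq : 0 < - y0 / (eps * c)) by (apply Rdiv_lt_0_compat; nra).
    pose proof (exp_ineq1_le (c * t)).
    assert (c * t >= - y0 / eps).
    { replace (- y0 / eps) with (c * (- y0 / (eps * c))) by (field; lra). nra. }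
    assert (Hpos : 0 < exp (c * t)) by apply exp_pos.
    replace (exp (- c * t)) with (/ exp (c * t)).
    2:{ rewrite <- exp_Ropp. f_equal; ring. }
    assert (eps * exp (c * t) >= - y0).
    { assert (eps * (1 + c * t) >= - y0). { assert (eps * (c*t) >= eps * (- y0 / eps)) by (apply Rmult_ge_compat_l; lra).
        replace (eps * (- y0 / eps)) with (- y0) in H1 by (field; lra). nra. } nra. }
    apply Rmult_le_reg_r with (exp (c * t)); auto. rewrite Rmult_assoc, Rinv_l by lra. nra.
Qed.


Definition Ppos P := 0 < b_ P /\ 0 < lam_ P /\ 0 < gam_ P /\ 0 < m_ P /\ 0 < mu_ P /\ 0 < r_ P /\
  0 < n_ P /\ 0 < p_ P /\ 0 < h_ P /\ 0 < be_ P /\ 0 < de_ P /\ 0 < e_ P.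
Definition x0ok (x0 : st) := 0 <= x0 iB /\ 0 <= x0 iI /\ 0 <= x0 iM /\ 0 <= x0 iN /\ 0 < x0 iB + x0 iI.

Definition Sl P (x0 : st) := Rmin (x0 iB + x0 iI) (b_ P / (m_ P + mu_ P)).
Definition Su P (x0 : st) := Rmax (x0 iB + x0 iI) (b_ P / m_ P).
Definition Wb P (x0 : st) := Rmax (x0 iM + x0 iN) (r_ P * h_ P * Su P x0 / p_ P).
Definition Fex P x0 := Fc P 0 (Sl P x0) (Su P x0) (Wb P x0).
Definition Xs P x0 := sol (Fex P x0) x0.

Lemma consts P x0 : Ppos P -> x0ok x0 ->
  0 < Sl P x0 /\ Sl P x0 <= Su P x0 /\ Sl P x0 <= b_ P / (m_ P + mu_ P) /\ b_ P / m_ P <= Su P x0 /\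
  Sl P x0 <= x0 iB + x0 iI <= Su P x0 /\ x0 iM + x0 iN <= Wb P x0 /\ r_ P * h_ P * Su P x0 / p_ P <= Wb P x0 /\
  0 < Wb P x0 /\ 0 < Su P x0.
Proof.
  intros HP Hx. destruct HP as [Hb [_ [_ [Hm [Hmu [Hr [_ [Hp [Hh _]]]]]]]]]. destruct Hx as [? [? [? [? ?]]]].
  assert (0 < b_ P / (m_ P + mu_ P)) by (apply Rdiv_lt_0_compat; lra).
  assert (0 < b_ P / m_ P) by (apply Rdiv_lt_0_compat; lra).
  unfold Sl, Su, Wb.
  assert (Su0 : 0 < Rmax (x0 iB + x0 iI) (b_ P / m_ P)) by (eapply Rlt_le_trans; [|apply Rmax_l]; lra).
  assert (0 < r_ P * h_ P * Rmax (x0 iB + x0 iI) (b_ P / m_ P) / p_ P).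
  { apply Rdiv_lt_0_compat; auto. apply Rmult_lt_0_compat; auto. nra. }
  repeat split; try apply Rmin_l; try apply Rmin_r; try apply Rmax_l; try apply Rmax_r; auto.
  - unfold Rmin; destruct Rle_dec; lra.
  - eapply Rle_trans; [apply Rmin_l| apply Rmax_l].
  - eapply Rlt_le_trans; [|apply Rmax_r]. auto.
Qed.

Lemma Fex_lip P x0 : Ppos P -> x0ok x0 -> exists L K, FLip (Fex P x0) L K.
Proof.
  intros HP Hx. pose proof (consts P x0 HP Hx) as [C1 [C2 [C3 [C4 [C5 [C6 [C7 [C8 C9]]]]]]]]. unfold Fex. apply Fc_lip; try lra.
  destruct HP as [_ [_ [_ [_ [_ [_ [_ [_ [Hh _]]]]]]]]]; auto.
Qed.

Lemma lin_cont F L K x0 (H : FLip F L K) a c1 c2 i j t :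
  continuity_pt (fun s => a + c1 * sol F x0 s i + c2 * sol F x0 s j) t.
Proof.
  apply continuity_pt_plus. apply continuity_pt_plus. apply continuity_pt_const; intro; auto.
  apply continuity_pt_scal. eapply sol_cont; eauto. apply continuity_pt_scal. eapply sol_cont; eauto.
Qed.

Lemma lin_der F L K x0 (H : FLip F L K) a c1 c2 i j t : 0 < t ->
  derivable_pt_lim (fun s => a + c1 * sol F x0 s i + c2 * sol F x0 s j) t
    (c1 * F (sol F x0 t) i + c2 * F (sol F x0 t) j).
Proof.
  intros Ht. replace (c1 * F (sol F x0 t) i + c2 * F (sol F x0 t) j) with (0 + c1 * F (sol F x0 t) i + c2 * F (sol F x0 t) j) by ring.
  apply (derivable_pt_lim_plus (fun s => a + c1 * sol F x0 s i) (fun s => c2 * sol F x0 s j)).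
  apply (derivable_pt_lim_plus (fun s => a) (fun s => c1 * sol F x0 s i)).
  apply derivable_pt_lim_const.
  apply (derivable_pt_lim_scal (fun s => sol F x0 s i)). eapply sol_deriv; eauto.
  apply (derivable_pt_lim_scal (fun s => sol F x0 s j)). eapply sol_deriv; eauto.
Qed.

Lemma clip0 hi x : 0 <= x -> 0 <= hi -> clip (- 0) (hi + 0) x = Rmin hi x.
Proof. intros. unfold clip, Rmax, Rmin; repeat destruct Rle_dec; lra. Qed.
Lemma clipneg hi x : x < 0 -> 0 <= hi -> clip (- 0) (hi + 0) x = 0.
Proof. intros. unfold clip, Rmax, Rmin; repeat destruct Rle_dec; lra. Qed.
Lemma clip0_bnd hi x : 0 <= hi -> 0 <= clip (- 0) (hi + 0) x <= hi.
Proof. intros. unfold clip, Rmax, Rmin; repeat destruct Rle_dec; lra. Qed.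

Lemma inv_pos P x0 L K : Ppos P -> x0ok x0 -> FLip (Fex P x0) L K ->
  forall t, 0 <= t -> 0 <= Xs P x0 t iB /\ 0 <= Xs P x0 t iI /\ 0 <= Xs P x0 t iM /\ 0 <= Xs P x0 t iN.
Proof.
  intros HP Hx HF. pose proof (consts P x0 HP Hx) as [C1 [C2 [C3 [C4 [C5 [C6 [C7 [C8 C9]]]]]]]].
  pose proof HP as [Hb [Hlam [Hgam [Hm [Hmu [Hr [Hn [Hp [Hh [Hbe [Hde He]]]]]]]]]]].
  pose proof Hx as [HB0 [HI0 [HM0 [HN0 HS0]]]].
  assert (HSu : 0 <= Su P x0) by lra. assert (HW : 0 <= Wb P x0) by lra.
  assert (G : forall i, (forall u : st, u i < 0 -> 0 <= Fex P x0 u i) -> x0 i >= 0 ->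
     forall t, 0 <= t -> 0 <= Xs P x0 t i).
  { intros i Hi H0 t Ht.
    assert (E : forall s, Xs P x0 s i = 0 + 1 * sol (Fex P x0) x0 s i + 0 * sol (Fex P x0) x0 s i) by (intros; unfold Xs; ring).
    rewrite E. apply (nonneg_inv (fun s => 0 + 1 * sol (Fex P x0) x0 s i + 0 * sol (Fex P x0) x0 s i) (fun s => 1 * Fex P x0 (sol (Fex P x0) x0 s) i + 0 * Fex P x0 (sol (Fex P x0) x0 s) i)); auto.
    - intros t0; exact (lin_cont _ L K x0 HF 0 1 0 i i t0).
    - intros t0 Ht0; exact (lin_der _ L K x0 HF 0 1 0 i i t0 Ht0).
    - rewrite (sol_0 _ L K x0 HF). lra.
    - intros s Hs Hy. assert (sol (Fex P x0) x0 s i < 0) by lra. specialize (Hi _ H). lra. }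
  intros t Ht. repeat split; apply G; auto; try lra; clear t Ht; intros u Hu; unfold Fex, Fc; cbv zeta.
  - rewrite (clipneg _ (u iB)) by lra. lra.
  - rewrite (clipneg _ (u iI)) by lra.
    pose proof (clip0_bnd (Su P x0) (u iB) HSu). pose proof (clip0_bnd (Wb P x0) (u iN) HW).
    assert (0 <= lam_ P * clip (- 0) (Su P x0 + 0) (u iB) * clip (- 0) (Wb P x0 + 0) (u iN)).
    { apply Rmult_le_pos; [apply Rmult_le_pos|]; lra. }
    lra.
  - rewrite (clipneg _ (u iM)) by lra.
    pose proof (clip0_bnd (Wb P x0) (u iN) HW). nra.
  - rewrite (clipneg _ (u iN)) by lra.
    pose proof (clip0_bnd (Su P x0) (u iI) HSu). pose proof (clip0_bnd (Wb P x0) (u iM) HW).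
    assert (0 <= be_ P * clip (- 0) (Wb P x0 + 0) (u iM) * clip (- 0) (Su P x0 + 0) (u iI)).
    { apply Rmult_le_pos; [apply Rmult_le_pos|]; lra. }
    lra.
Qed.

Lemma FBI_sum P x0 (u : st) : Ppos P -> x0ok x0 -> 0 <= u iB -> 0 <= u iI ->
  Fex P x0 u iB + Fex P x0 u iI =
  b_ P * (Rmin (Su P x0) (u iB) + Rmin (Su P x0) (u iI)) / Rmax (Sl P x0) (Rmin (Su P x0) (u iB) + Rmin (Su P x0) (u iI))
  - m_ P * (Rmin (Su P x0) (u iB) + Rmin (Su P x0) (u iI)) - mu_ P * Rmin (Su P x0) (u iI).
Proof.
  intros HP Hx HB HI. pose proof (consts P x0 HP Hx) as [C1 [C2 [C3 [C4 [C5 [C6 [C7 [C8 C9]]]]]]]].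
  unfold Fex, Fc; cbv zeta. rewrite !clip0 by lra.
  assert (0 < Rmax (Sl P x0) (Rmin (Su P x0) (u iB) + Rmin (Su P x0) (u iI))) by (eapply Rlt_le_trans; [|apply Rmax_l]; lra).
  field. lra.
Qed.

Lemma inv_S P x0 L K : Ppos P -> x0ok x0 -> FLip (Fex P x0) L K ->
  forall t, 0 <= t -> Sl P x0 <= Xs P x0 t iB + Xs P x0 t iI <= Su P x0.
Proof.
  intros HP Hx HF. pose proof (consts P x0 HP Hx) as [C1 [C2 [C3 [C4 [C5 [C6 [C7 [C8 C9]]]]]]]].
  pose proof HP as [Hb [Hlam [Hgam [Hm [Hmu [Hr [Hn [Hp [Hh [Hbe [Hde He]]]]]]]]]]].
  pose proof (inv_pos P x0 L K HP Hx HF) as Hpos.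
  unfold Xs in *.
  intros t Ht. split.
  - assert (E : sol (Fex P x0) x0 t iB + sol (Fex P x0) x0 t iI - Sl P x0 = (- Sl P x0) + 1 * sol (Fex P x0) x0 t iB + 1 * sol (Fex P x0) x0 t iI) by ring.
    cut (0 <= sol (Fex P x0) x0 t iB + sol (Fex P x0) x0 t iI - Sl P x0); [lra|]. rewrite E.
    apply (nonneg_inv (fun s => - Sl P x0 + 1 * sol (Fex P x0) x0 s iB + 1 * sol (Fex P x0) x0 s iI)
       (fun s => 1 * Fex P x0 (sol (Fex P x0) x0 s) iB + 1 * Fex P x0 (sol (Fex P x0) x0 s) iI)); auto.
    + intros t0; exact (lin_cont (Fex P x0) L K x0 HF _ 1 1 iB iI t0).
    + intros t0 Ht0; exact (lin_der (Fex P x0) L K x0 HF _ 1 1 iB iI t0 Ht0).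
    + rewrite !(sol_0 (Fex P x0) L K x0 HF). lra.
    + intros s Hs Hy. destruct (Hpos s (Rlt_le _ _ Hs)) as [HB [HI _]].
      rewrite !Rmult_1_l, FBI_sum by auto.
      set (B := sol (Fex P x0) x0 s iB) in *. set (I := sol (Fex P x0) x0 s iI) in *.
      rewrite (Rmin_right (Su P x0) B) by lra. rewrite (Rmin_right (Su P x0) I) by lra.
 rewrite Rmax_left by lra.
      assert (Hc : b_ P * (B + I) / Sl P x0 - m_ P * (B + I) - mu_ P * I = (B + I) * (b_ P / Sl P x0 - (m_ P + mu_ P)) + mu_ P * B) by (field; lra).
      rewrite Hc. assert (m_ P + mu_ P <= b_ P / Sl P x0).
      { apply Rmult_le_reg_r with (Sl P x0); auto. unfold Rdiv. rewrite Rmult_assoc, Rinv_l by lra.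
        apply Rmult_le_compat_l with (r := m_ P + mu_ P) in C3; [|lra]. unfold Rdiv in C3.
        replace ((m_ P + mu_ P) * (b_ P * / (m_ P + mu_ P))) with (b_ P) in C3 by (field; lra). lra. }
      nra.
  - assert (E : Su P x0 - (sol (Fex P x0) x0 t iB + sol (Fex P x0) x0 t iI) = Su P x0 + (-1) * sol (Fex P x0) x0 t iB + (-1) * sol (Fex P x0) x0 t iI) by ring.
    cut (0 <= Su P x0 - (sol (Fex P x0) x0 t iB + sol (Fex P x0) x0 t iI)); [lra|]. rewrite E.
    apply (nonneg_inv (fun s => Su P x0 + (-1) * sol (Fex P x0) x0 s iB + (-1) * sol (Fex P x0) x0 s iI)
       (fun s => (-1) * Fex P x0 (sol (Fex P x0) x0 s) iB + (-1) * Fex P x0 (sol (Fex P x0) x0 s) iI)); auto.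
    + intros t0; exact (lin_cont (Fex P x0) L K x0 HF _ (-1) (-1) iB iI t0).
    + intros t0 Ht0; exact (lin_der (Fex P x0) L K x0 HF _ (-1) (-1) iB iI t0 Ht0).
    + rewrite !(sol_0 (Fex P x0) L K x0 HF). lra.
    + intros s Hs Hy. destruct (Hpos s (Rlt_le _ _ Hs)) as [HB [HI _]].
      replace ((-1) * Fex P x0 (sol (Fex P x0) x0 s) iB + (-1) * Fex P x0 (sol (Fex P x0) x0 s) iI) with (- (Fex P x0 (sol (Fex P x0) x0 s) iB + Fex P x0 (sol (Fex P x0) x0 s) iI)) by ring.
      rewrite FBI_sum by auto.
      set (B := sol (Fex P x0) x0 s iB) in *. set (I := sol (Fex P x0) x0 s iI) in *.

      set (cB := Rmin (Su P x0) B). set (cI := Rmin (Su P x0) I).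
      assert (Hc : Su P x0 <= cB + cI /\ 0 <= cI).
      { unfold cB, cI, Rmin; repeat destruct Rle_dec; lra. }
      rewrite Rmax_right by lra.
      replace (b_ P * (cB + cI) / (cB + cI)) with (b_ P) by (field; lra).
      assert (b_ P <= m_ P * Su P x0).
      { apply Rmult_le_compat_l with (r := m_ P) in C4; [|lra]. unfold Rdiv in C4.
        replace (m_ P * (b_ P * / m_ P)) with (b_ P) in C4 by (field; lra). lra. }
      nra.
Qed.

Lemma FMN_sum P x0 (u : st) : Ppos P -> x0ok x0 -> 0 <= u iB -> 0 <= u iI -> 0 <= u iM -> 0 <= u iN ->
  Fex P x0 u iM + Fex P x0 u iN =
  (r_ P - n_ P) * (Rmin (Wb P x0) (u iM) + Rmin (Wb P x0) (u iN))
  - p_ P * / (h_ P * Rmax (Sl P x0) (Rmin (Su P x0) (u iB) + Rmin (Su P x0) (u iI)))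
     * (Rmin (Wb P x0) (u iM) + Rmin (Wb P x0) (u iN)) * (Rmin (Wb P x0) (u iM) + Rmin (Wb P x0) (u iN))
  - e_ P * Rmin (Su P x0) (u iB) * (Rmin (Wb P x0) (u iM) + Rmin (Wb P x0) (u iN)).
Proof.
  intros HP Hx HB HI HM HN. pose proof (consts P x0 HP Hx) as [C1 [C2 [C3 [C4 [C5 [C6 [C7 [C8 C9]]]]]]]].
  unfold Fex, Fc; cbv zeta. rewrite !clip0 by lra. ring.
Qed.

Lemma inv_W P x0 L K : Ppos P -> x0ok x0 -> FLip (Fex P x0) L K ->
  forall t, 0 <= t -> Xs P x0 t iM + Xs P x0 t iN <= Wb P x0.
Proof.
  intros HP Hx HF. pose proof (consts P x0 HP Hx) as [C1 [C2 [C3 [C4 [C5 [C6 [C7 [C8 C9]]]]]]]].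
  pose proof HP as [Hb [Hlam [Hgam [Hm [Hmu [Hr [Hn [Hp [Hh [Hbe [Hde He]]]]]]]]]]].
  pose proof (inv_pos P x0 L K HP Hx HF) as Hpos. pose proof (inv_S P x0 L K HP Hx HF) as HS.
  unfold Xs in *. intros t Ht.
  assert (E : Wb P x0 - (sol (Fex P x0) x0 t iM + sol (Fex P x0) x0 t iN) = Wb P x0 + (-1) * sol (Fex P x0) x0 t iM + (-1) * sol (Fex P x0) x0 t iN) by ring.
  cut (0 <= Wb P x0 - (sol (Fex P x0) x0 t iM + sol (Fex P x0) x0 t iN)); [lra|]. rewrite E.
  apply (nonneg_inv (fun s => Wb P x0 + (-1) * sol (Fex P x0) x0 s iM + (-1) * sol (Fex P x0) x0 s iN)
     (fun s => (-1) * Fex P x0 (sol (Fex P x0) x0 s) iM + (-1) * Fex P x0 (sol (Fex P x0) x0 s) iN)); auto.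
  + intros t0; exact (lin_cont (Fex P x0) L K x0 HF _ (-1) (-1) iM iN t0).
  + intros t0 Ht0; exact (lin_der (Fex P x0) L K x0 HF _ (-1) (-1) iM iN t0 Ht0).
  + rewrite !(sol_0 _ L K x0 HF). lra.
  + intros s Hs Hy. destruct (Hpos s (Rlt_le _ _ Hs)) as [HB [HI [HM HN]]]. pose proof (HS s (Rlt_le _ _ Hs)) as HS'.
    replace ((-1) * Fex P x0 (sol (Fex P x0) x0 s) iM + (-1) * Fex P x0 (sol (Fex P x0) x0 s) iN)
      with (- (Fex P x0 (sol (Fex P x0) x0 s) iM + Fex P x0 (sol (Fex P x0) x0 s) iN)) by ring.
    rewrite FMN_sum by auto.
    set (B := sol (Fex P x0) x0 s iB) in *. set (I := sol (Fex P x0) x0 s iI) in *.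
    set (M := sol (Fex P x0) x0 s iM) in *. set (N := sol (Fex P x0) x0 s iN) in *.
    rewrite (Rmin_right (Su P x0) B) by lra. rewrite (Rmin_right (Su P x0) I) by lra.
    rewrite Rmax_right by lra.
    set (q := Rmin (Wb P x0) M + Rmin (Wb P x0) N).
    assert (Hq : Wb P x0 <= q) by (unfold q, Rmin; repeat destruct Rle_dec; lra).
    set (iv := / (h_ P * (B + I))).
    assert (Hiv : / (h_ P * Su P x0) <= iv) by (apply Rinv_le_contravar; nra).
    assert (Hr2 : r_ P <= p_ P * / (h_ P * Su P x0) * Wb P x0).
    { apply Rmult_le_compat_l with (r := p_ P * / (h_ P * Su P x0)) in C7.
      2:{ apply Rmult_le_pos; [lra|]. left; apply Rinv_0_lt_compat; nra. }
      replace (p_ P * / (h_ P * Su P x0) * (r_ P * h_ P * Su P x0 / p_ P)) with (r_ P) in C7 by (field; nra). lra. }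
    assert (Hpi : p_ P * / (h_ P * Su P x0) * Wb P x0 <= p_ P * iv * q).
    { apply Rmult_le_compat; try lra. apply Rmult_le_pos; [lra|]. left; apply Rinv_0_lt_compat; nra.
      apply Rmult_le_compat_l; lra. }
    assert (0 <= e_ P * B * q) by (apply Rmult_le_pos; [apply Rmult_le_pos|]; lra).
    assert (0 <= n_ P * q) by nra.
    replace ((r_ P - n_ P) * q - p_ P * iv * q * q - e_ P * B * q) with (q * (r_ P - p_ P * iv * q) - n_ P * q - e_ P * B * q) by ring.
    assert (q * (r_ P - p_ P * iv * q) <= 0) by nra. lra.
Qed.

Lemma region P x0 L K : Ppos P -> x0ok x0 -> FLip (Fex P x0) L K -> forall t, 0 <= t ->
  let u := Xs P x0 t in
  0 <= u iB <= Su P x0 /\ 0 <= u iI <= Su P x0 /\ 0 <= u iM <= Wb P x0 /\ 0 <= u iN <= Wb P x0 /\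
  Sl P x0 <= u iB + u iI <= Su P x0 /\ u iM + u iN <= Wb P x0.
Proof.
  intros HP Hx HF t Ht u.
  destruct (inv_pos P x0 L K HP Hx HF t Ht) as [? [? [? ?]]]. pose proof (inv_S P x0 L K HP Hx HF t Ht).
  pose proof (inv_W P x0 L K HP Hx HF t Ht). unfold u. lra.
Qed.


Lemma Fex_fvec P x0 L K : Ppos P -> x0ok x0 -> FLip (Fex P x0) L K -> forall t, 0 <= t ->
  forall i, Fex P x0 (Xs P x0 t) i = fvec P (Xs P x0 t) i.
Proof.
  intros HP Hx HF t Ht. pose proof (region P x0 L K HP Hx HF t Ht) as R. cbv zeta in R.
  unfold Fex. apply Fc_eq; lra.
Qed.

Lemma X_deriv P x0 L K : Ppos P -> x0ok x0 -> FLip (Fex P x0) L K -> forall t, 0 < t ->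
  forall i, derivable_pt_lim (fun s => Xs P x0 s i) t (fvec P (Xs P x0 t) i).
Proof.
  intros HP Hx HF t Ht i. rewrite <- (Fex_fvec P x0 L K HP Hx HF t) by lra.
  unfold Xs. eapply sol_deriv; eauto.
Qed.

Lemma S_der_val P (u : st) : u iB + u iI <> 0 ->
  fvec P u iB + fvec P u iI = b_ P - m_ P * (u iB + u iI) - mu_ P * u iI.
Proof. intros H. unfold fvec, fB, fI. field. auto. Qed.

Lemma X_liminf P x0 L K : Ppos P -> x0ok x0 -> FLip (Fex P x0) L K ->
  liminf_ge (fun t => Xs P x0 t iB + Xs P x0 t iI) (b_ P / (m_ P + mu_ P)).
Proof.
  intros HP Hx HF. pose proof (consts P x0 HP Hx) as [C1 [C2 [C3 [C4 [C5 [C6 [C7 [C8 C9]]]]]]]].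
  pose proof HP as [Hb [Hlam [Hgam [Hm [Hmu _]]]]].
  set (c := m_ P + mu_ P). set (a := b_ P / c).
  set (y := fun s => - a + 1 * sol (Fex P x0) x0 s iB + 1 * sol (Fex P x0) x0 s iI).
  assert (Hy : forall t, 0 <= t -> y 0 * exp (- c * t) <= y t).
  { apply (exp_lower y (fun s => 1 * Fex P x0 (sol (Fex P x0) x0 s) iB + 1 * Fex P x0 (sol (Fex P x0) x0 s) iI)).
    - intros t0; exact (lin_cont (Fex P x0) L K x0 HF _ 1 1 iB iI t0).
    - intros t0 Ht0; exact (lin_der (Fex P x0) L K x0 HF _ 1 1 iB iI t0 Ht0).
    - intros t Ht. pose proof (region P x0 L K HP Hx HF t (Rlt_le _ _ Ht)) as R. cbv zeta in R. unfold Xs in R.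
      pose proof (Fex_fvec P x0 L K HP Hx HF t (Rlt_le _ _ Ht)) as E. unfold Xs in E.
      rewrite !Rmult_1_l, !E, S_der_val by lra. unfold y.
      replace (- c * (- a + 1 * sol (Fex P x0) x0 t iB + 1 * sol (Fex P x0) x0 t iI))
        with (c * a - c * (sol (Fex P x0) x0 t iB + sol (Fex P x0) x0 t iI)) by ring.
      replace (c * a) with (b_ P) by (unfold a, c; field; lra). unfold c. nra. }
  intros eps He. destruct (exp_eventually (y 0) c eps) as [T HT]; [unfold c; lra| auto|].
  exists (Rmax T 0). intros t Ht. specialize (HT t (Rle_trans _ _ _ (Rmax_l _ _) Ht)).
  specialize (Hy t (Rle_trans _ _ _ (Rmax_r _ _) Ht)). unfold y, Xs in *. fold a. lra.
Qed.

Lemma X_limsup P x0 L K : Ppos P -> x0ok x0 -> FLip (Fex P x0) L K ->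
  limsup_le (fun t => Xs P x0 t iB + Xs P x0 t iI) (b_ P / m_ P).
Proof.
  intros HP Hx HF. pose proof (consts P x0 HP Hx) as [C1 [C2 [C3 [C4 [C5 [C6 [C7 [C8 C9]]]]]]]].
  pose proof HP as [Hb [Hlam [Hgam [Hm [Hmu _]]]]].
  set (c := m_ P). set (a := b_ P / c).
  set (y := fun s => a + (-1) * sol (Fex P x0) x0 s iB + (-1) * sol (Fex P x0) x0 s iI).
  assert (Hy : forall t, 0 <= t -> y 0 * exp (- c * t) <= y t).
  { apply (exp_lower y (fun s => (-1) * Fex P x0 (sol (Fex P x0) x0 s) iB + (-1) * Fex P x0 (sol (Fex P x0) x0 s) iI)).
    - intros t0; exact (lin_cont (Fex P x0) L K x0 HF _ (-1) (-1) iB iI t0).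
    - intros t0 Ht0; exact (lin_der (Fex P x0) L K x0 HF _ (-1) (-1) iB iI t0 Ht0).
    - intros t Ht. pose proof (region P x0 L K HP Hx HF t (Rlt_le _ _ Ht)) as R. cbv zeta in R. unfold Xs in R.
      pose proof (Fex_fvec P x0 L K HP Hx HF t (Rlt_le _ _ Ht)) as E. unfold Xs in E.
      rewrite !E.
      replace ((-1) * fvec P (sol (Fex P x0) x0 t) iB + (-1) * fvec P (sol (Fex P x0) x0 t) iI)
        with (- (fvec P (sol (Fex P x0) x0 t) iB + fvec P (sol (Fex P x0) x0 t) iI)) by ring.
      rewrite S_der_val by lra. unfold y.
      replace (- c * (a + -1 * sol (Fex P x0) x0 t iB + -1 * sol (Fex P x0) x0 t iI))
        with (- (c * a) + c * (sol (Fex P x0) x0 t iB + sol (Fex P x0) x0 t iI)) by ring.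
      replace (c * a) with (b_ P) by (unfold a, c; field; lra). unfold c. nra. }
  intros eps He. destruct (exp_eventually (y 0) c eps) as [T HT]; [unfold c; lra| auto|].
  exists (Rmax T 0). intros t Ht. specialize (HT t (Rle_trans _ _ _ (Rmax_l _ _) Ht)).
  specialize (Hy t (Rle_trans _ _ _ (Rmax_r _ _) Ht)). unfold y, Xs in *. fold a. lra.
Qed.


Lemma le_eps x y : (forall eps, 0 < eps -> x <= y + eps) -> x <= y.
Proof. intros H. destruct (Rle_dec x y); auto. specialize (H ((x - y) / 2)). lra. Qed.

Lemma mvt_right (f df : R -> R) a b M : a < b ->
  (forall c, a < c <= b -> continuity_pt f c) ->
  (forall c, a < c < b -> derivable_pt_lim f c (df c)) ->
  (forall c, a < c < b -> Rabs (df c) <= M) ->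
  (forall eps, 0 < eps -> exists d, 0 < d /\ forall v, a <= v < a + d -> Rabs (f v - f a) < eps) ->
  Rabs (f b - f a) <= M * (b - a).
Proof.
  intros Hab Hc Hd HM Hr. assert (M0 : 0 <= M) by (pose proof (HM ((a+b)/2)) as H; pose proof (Rabs_pos (df ((a+b)/2))); assert (a < (a+b)/2 < b) by lra; specialize (H H1); lra).
  apply le_eps. intros eps He. destruct (Hr eps He) as [d [Hd0 Hd1]].
  set (a' := a + Rmin d (b - a) / 2).
  assert (Ha' : a < a' < b /\ a' < a + d) by (unfold a', Rmin; destruct Rle_dec; lra).
  destruct (mvt_open f df a' b) as [c [Hc1 Hc2]]; [lra| | |].
  - intros c Hc'; apply Hc; lra.
  - intros c Hc'; apply Hd; lra.
  - specialize (Hd1 a' (conj (Rlt_le _ _ (proj1 (proj1 Ha'))) (proj2 Ha'))).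
    assert (Rabs (f b - f a') <= M * (b - a)).
    { rewrite Hc2, Rabs_mult, (Rabs_right (b - a')) by lra. apply Rmult_le_compat; try apply Rabs_pos; try lra. apply HM; lra. }
    replace (f b - f a) with ((f b - f a') + (f a' - f a)) by ring.
    eapply Rle_trans; [apply Rabs_triang|]. lra.
Qed.

Definition F2 P x0 := Fc P 1 (Sl P x0 / 2) (Su P x0) (Wb P x0).

Lemma uniq P x0 L K (HP : Ppos P) (Hx : x0ok x0) (HF : FLip (Fex P x0) L K) (Y : R -> st) :
  (forall i, Y 0 i = x0 i) ->
  (forall i, limit1_in (fun t => Y t i) (fun t => 0 < t) (x0 i) 0) ->
  (forall t, 0 < t -> forall i, derivable_pt_lim (fun s => Y s i) t (fvec P (Y t) i)) ->
  forall t, 0 <= t -> forall i, Y t i = Xs P x0 t i.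
Proof.
  intros HY0 HYl HYd.
  pose proof (consts P x0 HP Hx) as [C1 [C2 [C3 [C4 [C5 [C6 [C7 [C8 C9]]]]]]]].
  set (X := Xs P x0).
  assert (HX0 : forall i, X 0 i = x0 i) by (intros; unfold X, Xs; exact (sol_0 _ L K x0 HF i)).
  assert (HXc : forall i t, continuity_pt (fun s => X s i) t) by (intros; unfold X, Xs; eapply sol_cont; eauto).
  assert (HXr : forall t, 0 <= t -> let u := X t in
    0 <= u iB <= Su P x0 /\ 0 <= u iI <= Su P x0 /\ 0 <= u iM <= Wb P x0 /\ 0 <= u iN <= Wb P x0 /\
    Sl P x0 <= u iB + u iI <= Su P x0 /\ u iM + u iN <= Wb P x0) by (intros; unfold X; eapply region; eauto).
  assert (HXd : forall t, 0 < t -> forall i, derivable_pt_lim (fun s => X s i) t (fvec P (X t) i))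
    by (intros; unfold X; eapply X_deriv; eauto).
  assert (RC : forall a i, 0 <= a -> forall eps, 0 < eps -> exists d, 0 < d /\
            forall v, a <= v < a + d -> Rabs (Y v i - Y a i) < eps).
  { intros a i Ha eps He. destruct (Req_dec a 0) as [->|Hne].
    - destruct (HYl i eps He) as [d [Hd0 Hd1]]. exists d. split; auto. intros v Hv.
      destruct (Req_dec v 0) as [->|Hv0]. rewrite Rminus_diag, Rabs_R0; lra.
      rewrite HY0. apply (Hd1 v). split. lra. simpl. unfold R_dist. rewrite Rminus_0_r, Rabs_right; lra.
    - assert (Hc : continuity_pt (fun s => Y s i) a).
      { apply derivable_continuous_pt. exists (fvec P (Y a) i). apply HYd; lra. }
      destruct (Hc eps He) as [d [Hd0 Hd1]]. exists d. split; auto. intros v Hv.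
      destruct (Req_dec v a) as [->|Hva]. rewrite Rminus_diag, Rabs_R0; lra.
      apply (Hd1 v). split. split; [exact I| auto]. simpl. unfold R_dist. rewrite Rabs_right; lra. }
  set (Eq := fun u => forall i, Y u i = X u i).
  assert (Eq0 : Eq 0) by (intros i; rewrite HY0, HX0; auto).
  intros t1 Ht1. cut (Eq t1); [auto|]. destruct (classic (Eq t1)) as [|Hn1]; auto. exfalso.
  set (E := fun s => 0 <= s /\ forall u, 0 <= u <= s -> Eq u).
  assert (Hb : bound E).
  { exists t1. intros s [Hs Hu]. destruct (Rle_dec s t1); auto. exfalso. apply Hn1. apply Hu. lra. }
  assert (He : exists s, E s).
  { exists 0. split; [lra|]. intros u Hu. replace u with 0 by lra. auto. }
  destruct (completeness E Hb He) as [s Hl].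
  assert (Hs0 : 0 <= s) by (apply Hl; split; [lra|]; intros u Hu; replace u with 0 by lra; auto).
  assert (HA : forall u, 0 <= u < s -> Eq u).
  { intros u Hu. destruct (classic (Eq u)) as [|Hn]; auto. exfalso.
    assert (s <= u). { apply Hl. intros s' [Hs' Hu']. destruct (Rle_dec s' u); auto. exfalso. apply Hn, Hu'. lra. }
    lra. }
  assert (HB : Eq s).
  { destruct (Req_dec s 0) as [->|Hs]; auto. intros i.
    destruct (Req_dec (Y s i - X s i) 0) as [|Hne]; [lra|]. exfalso.
    assert (Hc : continuity_pt (fun v => Y v i - X v i) s).
    { apply continuity_pt_minus. apply derivable_continuous_pt. exists (fvec P (Y s) i). apply HYd; lra. apply HXc. }
    destruct (Hc (Rabs (Y s i - X s i))) as [d [Hd0 Hd1]]. apply Rabs_pos_lt; auto.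
    set (v := s - Rmin d s / 2).
    assert (Hv : 0 <= v < s /\ Rabs (v - s) < d).
    { unfold v, Rmin; destruct Rle_dec; rewrite Rabs_left; lra. }
    specialize (Hd1 v). simpl in Hd1. unfold R_dist in Hd1.
    assert (HH : Rabs (Y v i - X v i - (Y s i - X s i)) < Rabs (Y s i - X s i)).
    { apply Hd1. split. split; [exact I|lra]. tauto. }
    rewrite (HA v (proj1 Hv) i) in HH. replace (X v i - X v i - (Y s i - X s i)) with (- (Y s i - X s i)) in HH by ring.
    rewrite Rabs_Ropp in HH. lra. }
  set (d0 := Rmin (1/2) (Sl P x0 / 4)).
  assert (Hd0 : 0 < d0 /\ d0 <= 1/2 /\ d0 <= Sl P x0 / 4) by (unfold d0, Rmin; destruct Rle_dec; lra).
  destruct (RC s iB Hs0 d0 (proj1 Hd0)) as [e1 [He1 H1]].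
  destruct (RC s iI Hs0 d0 (proj1 Hd0)) as [e2 [He2 H2]].
  destruct (RC s iM Hs0 d0 (proj1 Hd0)) as [e3 [He3 H3]].
  destruct (RC s iN Hs0 d0 (proj1 Hd0)) as [e4 [He4 H4]].
  set (e := Rmin (Rmin e1 e2) (Rmin e3 e4)).
  assert (Hee : 0 < e /\ e <= e1 /\ e <= e2 /\ e <= e3 /\ e <= e4) by (unfold e, Rmin; repeat destruct Rle_dec; lra).
  destruct (Fc_lip P 1 (Sl P x0 / 2) (Su P x0) (Wb P x0)) as [L2 [K2 HF2]]; try lra.
  { destruct HP as [_ [_ [_ [_ [_ [_ [_ [_ [Hh _]]]]]]]]]; auto. }
  pose proof HF2 as [HL2 [HK2 [Hl2 Hb2]]].
  set (eta := Rmin (e / 2) (1 / (8 * L2 + 8))).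
  assert (Heta : 0 < eta /\ eta < e /\ 8 * L2 * eta <= 1).
  { assert (0 < 1 / (8 * L2 + 8)) by (apply Rdiv_lt_0_compat; lra).
    assert (8 * L2 * (1 / (8 * L2 + 8)) <= 1).
    { replace (8 * L2 * (1 / (8 * L2 + 8))) with (8 * L2 / (8 * L2 + 8)) by (field; lra).
      apply Rmult_le_reg_r with (8 * L2 + 8); [lra|]. unfold Rdiv. rewrite Rmult_assoc, Rinv_l by lra. lra. }
    unfold eta, Rmin; destruct Rle_dec; split; try nra; lra. }
  (* Y stays in the enlarged region on [s, s + e) *)
  assert (HYr : forall v, s <= v < s + e -> forall i, Fc P 1 (Sl P x0 / 2) (Su P x0) (Wb P x0) (Y v) i = fvec P (Y v) i).
  { intros v Hv. pose proof (HXr s Hs0) as R. cbv zeta in R.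
    specialize (H1 v ltac:(lra)). specialize (H2 v ltac:(lra)). specialize (H3 v ltac:(lra)). specialize (H4 v ltac:(lra)).
    rewrite (HB iB) in H1; rewrite (HB iI) in H2; rewrite (HB iM) in H3; rewrite (HB iN) in H4.
    apply Rabs_lt_between' in H1. apply Rabs_lt_between' in H2. apply Rabs_lt_between' in H3. apply Rabs_lt_between' in H4.
    apply Fc_eq; lra. }
  assert (HXr2 : forall v, 0 <= v -> forall i, Fc P 1 (Sl P x0 / 2) (Su P x0) (Wb P x0) (X v) i = fvec P (X v) i).
  { intros v Hv. pose proof (HXr v Hv) as R. cbv zeta in R. apply Fc_eq; lra. }
  set (U0 := 4 * (1 + Su P x0 + Wb P x0)).
  assert (HU0 : forall v, s <= v < s + e -> nrm (Y v) (X v) <= U0).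
  { intros v Hv. unfold U0. apply comp_nrm. intros i. pose proof (HXr s Hs0) as R. pose proof (HXr v ltac:(lra)) as R'. cbv zeta in R, R'.
    specialize (H1 v ltac:(lra)). specialize (H2 v ltac:(lra)). specialize (H3 v ltac:(lra)). specialize (H4 v ltac:(lra)).
    rewrite (HB iB) in H1; rewrite (HB iI) in H2; rewrite (HB iM) in H3; rewrite (HB iN) in H4.
    apply Rabs_lt_between' in H1. apply Rabs_lt_between' in H2. apply Rabs_lt_between' in H3. apply Rabs_lt_between' in H4.
    apply Rabs_le. destruct i; lra. }
  assert (Hk : forall k v, s <= v <= s + eta -> nrm (Y v) (X v) <= U0 / 2 ^ k).
  { induction k; intros v Hv.
    - simpl pow. rewrite Rdiv_1_r. apply HU0; lra.
    - replace (U0 / 2 ^ S k) with (4 * (eta * (L2 * (U0 / 2 ^ k))) + (U0 / 2 ^ S k - 4 * (eta * (L2 * (U0 / 2 ^ k))))) by ring.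
      assert (Hq : 0 <= U0 / 2 ^ S k - 4 * (eta * (L2 * (U0 / 2 ^ k)))).
      { simpl pow. pose proof (pow2_pos k). assert (0 <= U0) by (unfold U0; lra).
        replace (U0 / (2 * 2 ^ k) - 4 * (eta * (L2 * (U0 / 2 ^ k)))) with ((U0 / 2 ^ k) * (1 - 8 * L2 * eta) / 2) by (field; lra).
        apply Rmult_le_pos; [|lra]. apply Rmult_le_pos; [|lra]. apply Rdiv_le_0_compat; lra. }
      cut (nrm (Y v) (X v) <= 4 * (eta * (L2 * (U0 / 2 ^ k)))); [lra|].
      apply comp_nrm. intros i. destruct (Req_dec v s) as [->|Hvs].
      { rewrite (HB i), Rminus_diag, Rabs_R0. pose proof (pow2_pos k). assert (0 <= U0) by (unfold U0; lra).
        apply Rmult_le_pos; [lra|]. apply Rmult_le_pos; [lra|]. apply Rdiv_le_0_compat; lra. }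
      replace (Y v i - X v i) with ((Y v i - X v i) - (Y s i - X s i)) by (rewrite (HB i); ring).
      eapply Rle_trans.
      apply (mvt_right (fun w => Y w i - X w i) (fun w => fvec P (Y w) i - fvec P (X w) i) s v (L2 * (U0 / 2 ^ k))); try lra.
      + intros c Hc. apply continuity_pt_minus. apply derivable_continuous_pt. exists (fvec P (Y c) i). apply HYd; lra. apply HXc.
      + intros c Hc. apply derivable_pt_lim_minus; [apply HYd| apply HXd]; lra.
      + intros c Hc. rewrite <- (HYr c ltac:(lra)), <- (HXr2 c ltac:(lra)). eapply Rle_trans; [apply Hl2|].
        apply Rmult_le_compat_l; auto. apply IHk; lra.
      + intros eps Heps. destruct (RC s i Hs0 (eps / 2)) as [d [Hd Hd']]; [lra|].
        destruct (HXc i s (eps / 2)) as [d' [Hd'0 Hd'1]]; [lra|].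
        exists (Rmin d d'). split. unfold Rmin; destruct Rle_dec; lra. intros w Hw.
        assert (Hx1 : Rabs (X w i - X s i) < eps / 2).
        { destruct (Req_dec w s) as [->|Hws]. rewrite Rminus_diag, Rabs_R0; lra.
          apply (Hd'1 w). split. split; [exact I| auto]. simpl. unfold R_dist. rewrite Rabs_right; unfold Rmin in Hw; destruct Rle_dec in Hw; lra. }
        assert (Hy1 : Rabs (Y w i - Y s i) < eps / 2) by (apply Hd'; unfold Rmin in Hw; destruct Rle_dec in Hw; lra).
        replace (Y w i - X w i - (Y s i - X s i)) with ((Y w i - Y s i) - (X w i - X s i)) by ring.
        eapply Rle_lt_trans; [apply Rabs_triang|]. rewrite Rabs_Ropp. lra.
      + assert (0 <= L2 * (U0 / 2 ^ k)).
        { pose proof (pow2_pos k). assert (0 <= U0) by (unfold U0; lra).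
          apply Rmult_le_pos; [lra|]. apply Rdiv_le_0_compat; lra. }
        replace (eta * (L2 * (U0 / 2 ^ k))) with (L2 * (U0 / 2 ^ k) * eta) by ring.
        apply Rmult_le_compat_l; lra. }
  assert (HC : forall v, s <= v <= s + eta -> Eq v).
  { intros v Hv i. assert (Hz : nrm (Y v) (X v) <= 0).
    { apply (le_geo _ 0 U0). intros k. rewrite Rplus_0_l. apply Hk; auto. }
    pose proof (nrm_comp (Y v) (X v) i). pose proof (Rabs_pos (Y v i - X v i)).
    assert (Hz0 : Rabs (Y v i - X v i) = 0) by lra. apply Rabs_eq_0 in Hz0. lra. }
  assert (Hin : E (s + eta)).
  { split; [lra|]. intros u Hu. destruct (Rlt_dec u s). apply HA; lra. apply HC; lra. }
  assert (s + eta <= s) by (apply Hl; auto). lra.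
Qed.


Lemma cont_lim (f : R -> R) l : continuity_pt f 0 -> f 0 = l -> limit1_in f (fun t => 0 < t) l 0.
Proof.
  intros Hc Hl eps He. destruct (Hc eps He) as [d [Hd0 Hd1]]. exists d. split; auto.
  intros x [Hx Hdx]. rewrite <- Hl. apply Hd1. split; auto. split; [exact I|lra].
Qed.

Theorem theorem1
  (b lam gam m mu r n p h beta delta e : R)
  (hb : 0 < b) (hlam : 0 < lam) (hgam : 0 < gam) (hm : 0 < m) (hmu : 0 < mu)
  (hr : 0 < r) (hn : 0 < n) (hp : 0 < p) (hh : 0 < h) (hbeta : 0 < beta)
  (hdelta : 0 < delta) (he : 0 < e)
  (B0 I0 M0 N0 : R) (hX0 : inD0 B0 I0 M0 N0) :
  exists B I M N : R -> R,
    is_solution b lam gam m mu r n p h beta delta e B0 I0 M0 N0 B I M N /\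
    (forall B' I' M' N' : R -> R,
       is_solution b lam gam m mu r n p h beta delta e B0 I0 M0 N0 B' I' M' N' ->
       forall t, 0 <= t -> B' t = B t /\ I' t = I t /\ M' t = M t /\ N' t = N t) /\
    (forall t, 0 < t -> inD0 (B t) (I t) (M t) (N t)) /\
    liminf_ge (fun t => B t + I t) (b / (m + mu)) /\
    limsup_le (fun t => B t + I t) (b / m) /\
    (exists L, 0 < L /\ forall t, 0 <= t -> M t + N t <= L).
Proof.
  set (P := Build_Prm b lam gam m mu r n p h beta delta e).
  set (x0 := fun i => match i with iB => B0 | iI => I0 | iM => M0 | iN => N0 end).
  assert (HP : Ppos P) by (unfold Ppos; simpl; tauto).
  destruct hX0 as [hB0 [hI0 [hM0 [hN0 hS0]]]].
  assert (Hx : x0ok x0).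
  { unfold x0ok; simpl. repeat split; auto. destruct (Rle_dec (B0 + I0) 0); [|lra]. exfalso. apply hS0. lra. }
  destruct (Fex_lip P x0 HP Hx) as [L [K HF]].
  pose proof (consts P x0 HP Hx) as [C1 [C2 [C3 [C4 [C5 [C6 [C7 [C8 C9]]]]]]]].
  set (X := Xs P x0).
  assert (HR : forall t, 0 <= t -> let u := X t in
    0 <= u iB <= Su P x0 /\ 0 <= u iI <= Su P x0 /\ 0 <= u iM <= Wb P x0 /\ 0 <= u iN <= Wb P x0 /\
    Sl P x0 <= u iB + u iI <= Su P x0 /\ u iM + u iN <= Wb P x0) by (intros; unfold X; eapply region; eauto).
  assert (HX0 : forall i, X 0 i = x0 i) by (intros; unfold X, Xs; exact (sol_0 _ L K x0 HF i)).
  assert (HXc : forall i t, continuity_pt (fun s => X s i) t) by (intros; unfold X, Xs; eapply sol_cont; eauto).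
  assert (HXd : forall t, 0 < t -> forall i, derivable_pt_lim (fun s => X s i) t (fvec P (X t) i))
    by (intros; unfold X; eapply X_deriv; eauto).
  exists (fun t => X t iB), (fun t => X t iI), (fun t => X t iM), (fun t => X t iN).
  split; [|split; [|split; [|split; [|split]]]].
  - unfold is_solution. rewrite !HX0. split; [reflexivity|]. split; [reflexivity|]. split; [reflexivity|]. split; [reflexivity|].
    split; [apply cont_lim; auto; apply HX0|]. split; [apply cont_lim; auto; apply HX0|].
    split; [apply cont_lim; auto; apply HX0|]. split; [apply cont_lim; auto; apply HX0|].
    split.
    + intros t Ht. pose proof (HR t Ht) as R; cbv zeta in R. lra.
    + intros t Ht. split; [exact (HXd t Ht iB)|]. split; [exact (HXd t Ht iI)|].
      split; [exact (HXd t Ht iM)| exact (HXd t Ht iN)].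
  - intros B' I' M' N' Hs t Ht.
    destruct Hs as [E1 [E2 [E3 [E4 [L1 [L2 [L3 [L4 [_ HD]]]]]]]]].
    set (Y := fun t i => match i with iB => B' t | iI => I' t | iM => M' t | iN => N' t end).
    assert (U := uniq P x0 L K HP Hx HF Y).
    assert (U' : forall i, Y t i = X t i).
    { apply U; auto.
      - intros i; destruct i; simpl; auto.
      - intros i; destruct i; simpl; auto.
      - intros s Hs i. destruct (HD s Hs) as [D1 [D2 [D3 D4]]]. destruct i; simpl; auto. }
    repeat split; [exact (U' iB)|exact (U' iI)|exact (U' iM)|exact (U' iN)].
  - intros t Ht. pose proof (HR t (Rlt_le _ _ Ht)) as R; cbv zeta in R. unfold inD0. repeat split; try lra.
  - exact (X_liminf P x0 L K HP Hx HF).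
  - exact (X_limsup P x0 L K HP Hx HF).
  - exists (Wb P x0). split; auto. intros t Ht. pose proof (HR t Ht) as R; cbv zeta in R. lra.
Qed.
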